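(* Let $H\in C^\infty(\mathbb{R}^2)$ be convex and let $U\subset\mathbb{R}^2$ be a domain. For every $v\in C^\infty(U)$, $$2(-\det D^2v)[\det D^2_{pp}H(Dv)]=\operatorname{div}\Big\{D^2_{pp}H(Dv)D[H(Dv)]-\operatorname{div}[D_pH(Dv)]\,D_pH(Dv)\Big\}\quad\text{in }U.$$ *)

(* Defs.v *)
From Stdlib Require Import Reals List.
From Coquelicot Require Import Coquelicot.
Open Scope R_scope.

Definition d1 (f : R -> R -> R) : R -> R -> R :=
  fun x y => Derive (fun t => f t y) x.
Definition d2 (f : R -> R -> R) : R -> R -> R :=
  fun x y => Derive (fun t => f x t) y.

Definition pd (i : bool) (f : R -> R -> R) : R -> R -> R :=
  if i then d2 f else d1 f.

Definition iter_pd (l : list bool) (f : R -> R -> R) : R -> R -> R :=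
  fold_right pd f l.

Definition uncurry2 (f : R -> R -> R) : R * R -> R := fun p => f (fst p) (snd p).

Definition smooth_on (U : R -> R -> Prop) (f : R -> R -> R) : Prop :=
  forall (l : list bool) (x y : R), U x y ->
    continuous (uncurry2 (iter_pd l f)) (x, y) /\
    ex_derive (fun t => iter_pd l f t y) x /\
    ex_derive (fun t => iter_pd l f x t) y.

Definition convex2 (H : R -> R -> R) : Prop :=
  forall (x1 y1 x2 y2 t : R), 0 <= t <= 1 ->
    H (t * x1 + (1 - t) * x2) (t * y1 + (1 - t) * y2)
      <= t * H x1 y1 + (1 - t) * H x2 y2.

Definition open2 (U : R -> R -> Prop) : Prop :=
  open (fun p : R * R => U (fst p) (snd p)).

Definition connected2 (U : R -> R -> Prop) : Prop :=
  forall A B : R * R -> Prop, open A -> open B ->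
    (forall x y, U x y -> A (x, y) \/ B (x, y)) ->
    (forall x y, U x y -> A (x, y) -> B (x, y) -> False) ->
    (forall x y, U x y -> A (x, y)) \/ (forall x y, U x y -> B (x, y)).

Definition domain2 (U : R -> R -> Prop) : Prop :=
  open2 U /\ connected2 U /\ exists x y, U x y.

Definition detHess (f : R -> R -> R) : R -> R -> R :=
  fun x y => d1 (d1 f) x y * d2 (d2 f) x y - d1 (d2 f) x y * d2 (d1 f) x y.

Definition atDv (g v : R -> R -> R) : R -> R -> R :=
  fun x y => g (d1 v x y) (d2 v x y).

(* the vector field W = D^2_pp H(Dv) D[H(Dv)] - div[D_p H(Dv)] D_p H(Dv),
   component i (false = first, true = second) *)
Definition Wfield (H v : R -> R -> R) (i : bool) : R -> R -> R :=
  fun x y =>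
    atDv (pd i (d1 H)) v x y * d1 (atDv H v) x y
    + atDv (pd i (d2 H)) v x y * d2 (atDv H v) x y
    - (d1 (atDv (d1 H) v) x y + d2 (atDv (d2 H) v) x y) * atDv (pd i H) v x y.

Definition div2 (W : bool -> R -> R -> R) : R -> R -> R :=
  fun x y => d1 (W false) x y + d2 (W true) x y.

(* Main.v *)
Require Import Defs.
From Stdlib Require Import Reals List.
From Coquelicot Require Import Coquelicot.
From Stdlib Require Import FunctionalExtensionality.
Require Import Defs.
Open Scope R_scope.

Lemma isd_plus (f g : R -> R) x a b :
  is_derive f x a -> is_derive g x b -> is_derive (fun t => f t + g t) x (a + b).
Proof. intros Hf Hg. exact (is_derive_plus f g x a b Hf Hg). Qed.

Lemma isd_minus (f g : R -> R) x a b :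
  is_derive f x a -> is_derive g x b -> is_derive (fun t => f t - g t) x (a - b).
Proof. intros Hf Hg. exact (is_derive_minus f g x a b Hf Hg). Qed.

Lemma isd_mult (f g : R -> R) x a b :
  is_derive f x a -> is_derive g x b -> is_derive (fun t => f t * g t) x (a * g x + f x * b).
Proof. intros Hf Hg. apply (is_derive_mult f g x a b Hf Hg). intros; apply Rmult_comm. Qed.

Lemma smooth_d1 U f : smooth_on U f -> smooth_on U (d1 f).
Proof.
  intros Hf l x y Hxy. specialize (Hf (l ++ false :: nil) x y Hxy).
  unfold iter_pd in *. rewrite fold_right_app in Hf. exact Hf.
Qed.

Lemma smooth_d2 U f : smooth_on U f -> smooth_on U (d2 f).
Proof.
  intros Hf l x y Hxy. specialize (Hf (l ++ true :: nil) x y Hxy).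
  unfold iter_pd in *. rewrite fold_right_app in Hf. exact Hf.
Qed.

Lemma ex_x U f x y : smooth_on U f -> U x y -> ex_derive (fun t => f t y) x.
Proof. intros Hf Hxy. exact (proj1 (proj2 (Hf nil x y Hxy))). Qed.

Lemma ex_y U f x y : smooth_on U f -> U x y -> ex_derive (fun t => f x t) y.
Proof. intros Hf Hxy. exact (proj2 (proj2 (Hf nil x y Hxy))). Qed.

Lemma isd_x U f x y : smooth_on U f -> U x y -> is_derive (fun t => f t y) x (d1 f x y).
Proof. intros Hf Hxy. exact (Derive_correct _ _ (ex_x U f x y Hf Hxy)). Qed.

Lemma isd_y U f x y : smooth_on U f -> U x y -> is_derive (fun t => f x t) y (d2 f x y).
Proof. intros Hf Hxy. exact (Derive_correct _ _ (ex_y U f x y Hf Hxy)). Qed.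

Lemma diff_smooth G a b : smooth_on (fun _ _ => True) G ->
  differentiable_pt_lim G a b (d1 G a b) (d2 G a b).
Proof.
  intros HG. apply filterdiff_differentiable_pt_lim.
  apply (is_derive_filterdiff G a b (d1 G) (d2 G a b)).
  - apply filter_forall. intros [u w]. simpl.
    exact (isd_x _ G u w HG I).
  - exact (isd_y _ G a b HG I).
  - exact (proj1 (HG (false :: nil) a b I)).
Qed.

Lemma chain_x G U v x y : smooth_on (fun _ _ => True) G -> smooth_on U v -> U x y ->
  is_derive (fun t => atDv G v t y) x
    (atDv (d1 G) v x y * d1 (d1 v) x y + atDv (d2 G) v x y * d1 (d2 v) x y).
Proof.
  intros HG Hv Hxy. apply is_derive_Reals. unfold atDv.
  apply (derivable_pt_lim_comp_2d G (fun t => d1 v t y) (fun t => d2 v t y)).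
  - apply diff_smooth; exact HG.
  - apply is_derive_Reals. apply (isd_x U). apply smooth_d1; exact Hv. exact Hxy.
  - apply is_derive_Reals. apply (isd_x U). apply smooth_d2; exact Hv. exact Hxy.
Qed.

Lemma chain_y G U v x y : smooth_on (fun _ _ => True) G -> smooth_on U v -> U x y ->
  is_derive (fun t => atDv G v x t) y
    (atDv (d1 G) v x y * d2 (d1 v) x y + atDv (d2 G) v x y * d2 (d2 v) x y).
Proof.
  intros HG Hv Hxy. apply is_derive_Reals. unfold atDv.
  apply (derivable_pt_lim_comp_2d G (fun t => d1 v x t) (fun t => d2 v x t)).
  - apply diff_smooth; exact HG.
  - apply is_derive_Reals. apply (isd_y U). apply smooth_d1; exact Hv. exact Hxy.
  - apply is_derive_Reals. apply (isd_y U). apply smooth_d2; exact Hv. exact Hxy.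
Qed.

Lemma d1_atDv G U v x y : smooth_on (fun _ _ => True) G -> smooth_on U v -> U x y ->
  d1 (atDv G v) x y =
    atDv (d1 G) v x y * d1 (d1 v) x y + atDv (d2 G) v x y * d1 (d2 v) x y.
Proof. intros. apply is_derive_unique. apply (chain_x G U); assumption. Qed.

Lemma d2_atDv G U v x y : smooth_on (fun _ _ => True) G -> smooth_on U v -> U x y ->
  d2 (atDv G v) x y =
    atDv (d1 G) v x y * d2 (d1 v) x y + atDv (d2 G) v x y * d2 (d2 v) x y.
Proof. intros. apply is_derive_unique. apply (chain_y G U); assumption. Qed.

Lemma dx_d1atDv G U v x y l : smooth_on (fun _ _ => True) G -> smooth_on U v ->
  locally x (fun t => U t y) ->
  is_derive (fun t => atDv (d1 G) v t y * d1 (d1 v) t y + atDv (d2 G) v t y * d1 (d2 v) t y) x l ->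
  is_derive (fun t => d1 (atDv G v) t y) x l.
Proof.
  intros HG Hv HU Hd. eapply is_derive_ext_loc; [|exact Hd]; simpl.
  apply (filter_imp (fun t => U t y)); [|exact HU].
  intros t Ht. symmetry. apply (d1_atDv G U); assumption.
Qed.

Lemma dx_d2atDv G U v x y l : smooth_on (fun _ _ => True) G -> smooth_on U v ->
  locally x (fun t => U t y) ->
  is_derive (fun t => atDv (d1 G) v t y * d2 (d1 v) t y + atDv (d2 G) v t y * d2 (d2 v) t y) x l ->
  is_derive (fun t => d2 (atDv G v) t y) x l.
Proof.
  intros HG Hv HU Hd. eapply is_derive_ext_loc; [|exact Hd]; simpl.
  apply (filter_imp (fun t => U t y)); [|exact HU].
  intros t Ht. symmetry. apply (d2_atDv G U); assumption.
Qed.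

Lemma dy_d1atDv G U v x y l : smooth_on (fun _ _ => True) G -> smooth_on U v ->
  locally y (fun t => U x t) ->
  is_derive (fun t => atDv (d1 G) v x t * d1 (d1 v) x t + atDv (d2 G) v x t * d1 (d2 v) x t) y l ->
  is_derive (fun t => d1 (atDv G v) x t) y l.
Proof.
  intros HG Hv HU Hd. eapply is_derive_ext_loc; [|exact Hd]; simpl.
  apply (filter_imp (fun t => U x t)); [|exact HU].
  intros t Ht. symmetry. apply (d1_atDv G U); assumption.
Qed.

Lemma dy_d2atDv G U v x y l : smooth_on (fun _ _ => True) G -> smooth_on U v ->
  locally y (fun t => U x t) ->
  is_derive (fun t => atDv (d1 G) v x t * d2 (d1 v) x t + atDv (d2 G) v x t * d2 (d2 v) x t) y l ->
  is_derive (fun t => d2 (atDv G v) x t) y l.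
Proof.
  intros HG Hv HU Hd. eapply is_derive_ext_loc; [|exact Hd]; simpl.
  apply (filter_imp (fun t => U x t)); [|exact HU].
  intros t Ht. symmetry. apply (d2_atDv G U); assumption.
Qed.

Lemma open_loc U x y : open2 U -> U x y -> locally_2d U x y.
Proof.
  intros HU Hxy. apply locally_2d_locally. apply HU. exact Hxy.
Qed.

Lemma schwarz_U U f x y : open2 U -> smooth_on U f -> U x y ->
  d1 (d2 f) x y = d2 (d1 f) x y.
Proof.
  intros HU Hf Hxy. unfold d1, d2. apply Schwarz.
  - apply (locally_2d_impl U); [|apply open_loc; assumption].
    apply locally_2d_forall. intros u w Huw. repeat split.
    + exact (ex_x U f u w Hf Huw).
    + exact (ex_y U f u w Hf Huw).
    + exact (ex_x U (d2 f) u w (smooth_d2 _ _ Hf) Huw).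
    + exact (ex_y U (d1 f) u w (smooth_d1 _ _ Hf) Huw).
  - apply continuity_2d_pt_filterlim. exact (proj1 (Hf (false :: true :: nil) x y Hxy)).
  - apply continuity_2d_pt_filterlim. exact (proj1 (Hf (true :: false :: nil) x y Hxy)).
Qed.

Lemma d1_ext_loc f g x y : locally x (fun t => f t y = g t y) -> d1 f x y = d1 g x y.
Proof. intros H. unfold d1. apply Derive_ext_loc. exact H. Qed.

Lemma d2_ext_loc f g x y : locally y (fun t => f x t = g x t) -> d2 f x y = d2 g x y.
Proof. intros H. unfold d2. apply Derive_ext_loc. exact H. Qed.

Lemma d1_of f x y l : is_derive (fun t => f t y) x l -> d1 f x y = l.
Proof. intros H. unfold d1. apply is_derive_unique. exact H. Qed.

Lemma d2_of f x y l : is_derive (fun t => f x t) y l -> d2 f x y = l.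
Proof. intros H. unfold d2. apply is_derive_unique. exact H. Qed.

Ltac smooth_tac := match goal with
 | |- smooth_on _ (d1 _) => apply smooth_d1; smooth_tac
 | |- smooth_on _ (d2 _) => apply smooth_d2; smooth_tac
 | _ => eassumption end.

Ltac dstep_x U :=
  match goal with
  | |- is_derive (fun t => atDv _ _ t _) _ _ => eapply (chain_x _ U); [smooth_tac|smooth_tac|assumption]
  | |- is_derive (fun t => d1 (atDv _ _) t _) _ _ => eapply (dx_d1atDv _ U); [smooth_tac|smooth_tac|assumption|]
  | |- is_derive (fun t => d2 (atDv _ _) t _) _ _ => eapply (dx_d2atDv _ U); [smooth_tac|smooth_tac|assumption|]
  | |- is_derive (fun t => d1 _ t _) _ _ => eapply (isd_x U); [smooth_tac|assumption]
  | |- is_derive (fun t => d2 _ t _) _ _ => eapply (isd_x U); [smooth_tac|assumption]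
  | |- is_derive (fun t => @?f t + @?g t) _ _ => apply isd_plus
  | |- is_derive (fun t => @?f t - @?g t) _ _ => apply isd_minus
  | |- is_derive (fun t => @?f t * @?g t) _ _ => apply isd_mult
  end.

Ltac dstep_y U :=
  match goal with
  | |- is_derive (atDv _ _ _) _ _ => eapply (chain_y _ U); [smooth_tac|smooth_tac|assumption]
  | |- is_derive (d1 (atDv _ _) _) _ _ => eapply (dy_d1atDv _ U); [smooth_tac|smooth_tac|assumption|]
  | |- is_derive (d2 (atDv _ _) _) _ _ => eapply (dy_d2atDv _ U); [smooth_tac|smooth_tac|assumption|]
  | |- is_derive (d1 _ _) _ _ => eapply (isd_y U); [smooth_tac|assumption]
  | |- is_derive (d2 _ _) _ _ => eapply (isd_y U); [smooth_tac|assumption]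
  | |- is_derive (fun t => atDv _ _ _ t) _ _ => eapply (chain_y _ U); [smooth_tac|smooth_tac|assumption]
  | |- is_derive (fun t => d1 (atDv _ _) _ t) _ _ => eapply (dy_d1atDv _ U); [smooth_tac|smooth_tac|assumption|]
  | |- is_derive (fun t => d2 (atDv _ _) _ t) _ _ => eapply (dy_d2atDv _ U); [smooth_tac|smooth_tac|assumption|]
  | |- is_derive (fun t => d1 _ _ t) _ _ => eapply (isd_y U); [smooth_tac|assumption]
  | |- is_derive (fun t => d2 _ _ t) _ _ => eapply (isd_y U); [smooth_tac|assumption]
  | |- is_derive (fun t => @?f t + @?g t) _ _ => apply isd_plus
  | |- is_derive (fun t => @?f t - @?g t) _ _ => apply isd_minus
  | |- is_derive (fun t => @?f t * @?g t) _ _ => apply isd_mult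
  end.

Theorem lemma2p2 (H : R -> R -> R) (U : R -> R -> Prop) (v : R -> R -> R) :
  smooth_on (fun _ _ => True) H -> convex2 H -> domain2 U ->
  smooth_on U v ->
  forall x y : R, U x y ->
    2 * (- detHess v x y) * atDv (detHess H) v x y
    = div2 (Wfield H v) x y.
Proof.
  intros HH _ [HUo _] Hv x0 y0 Hxy.
  assert (HT : open2 (fun _ _ => True)) by exact open_true.
  assert (HU2 : locally_2d U x0 y0) by (apply open_loc; assumption).
  assert (HUx : locally x0 (fun t => U t y0)) by (apply locally_2d_1d_const_y; exact HU2).
  assert (HUy : locally y0 (fun t => U x0 t)) by (apply locally_2d_1d_const_x; exact HU2).
  assert (E1 : d2 (d1 H) = d1 (d2 H)).
  { extensionality a; extensionality b. symmetry. apply (schwarz_U _ H a b HT HH I). }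
  assert (E2 : d2 (d1 (d1 H)) = d1 (d1 (d2 H))).
  { extensionality a; extensionality b. rewrite <- E1. symmetry.
    apply (schwarz_U _ (d1 H) a b HT (smooth_d1 _ _ HH) I). }
  assert (E3 : d2 (d1 (d2 H)) = d1 (d2 (d2 H))).
  { extensionality a; extensionality b. symmetry.
    apply (schwarz_U _ (d2 H) a b HT (smooth_d2 _ _ HH) I). }
  assert (V1 : d2 (d1 v) x0 y0 = d1 (d2 v) x0 y0).
  { symmetry. apply (schwarz_U U); assumption. }
  assert (V2 : d2 (d1 (d1 v)) x0 y0 = d1 (d1 (d2 v)) x0 y0).
  { transitivity (d1 (d2 (d1 v)) x0 y0).
    - symmetry. apply (schwarz_U U (d1 v) x0 y0 HUo (smooth_d1 _ _ Hv) Hxy).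
    - symmetry. apply (d1_ext_loc (d1 (d2 v)) (d2 (d1 v)) x0 y0).
      apply (filter_imp (fun t => U t y0)); [|exact HUx].
      intros t Ht. apply (schwarz_U U v t y0 HUo Hv Ht). }
  assert (V3 : d2 (d2 (d1 v)) x0 y0 = d1 (d2 (d2 v)) x0 y0).
  { transitivity (d2 (d1 (d2 v)) x0 y0).
    - apply (d2_ext_loc (d2 (d1 v)) (d1 (d2 v)) x0 y0).
      apply (filter_imp (fun t => U x0 t)); [|exact HUy].
      intros t Ht. symmetry. apply (schwarz_U U v x0 t HUo Hv Ht).
    - symmetry. apply (schwarz_U U (d2 v) x0 y0 HUo (smooth_d2 _ _ Hv) Hxy). }
  eassert (Hdx : is_derive (fun t => Wfield H v false t y0) x0 _).
  { unfold Wfield, pd. cbv beta iota. repeat dstep_x U. }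
  eassert (Hdy : is_derive (fun t => Wfield H v true x0 t) y0 _).
  { unfold Wfield, pd. cbv beta iota. repeat dstep_y U. }
  unfold div2. rewrite (d1_of _ _ _ _ Hdx). rewrite (d2_of _ _ _ _ Hdy).
  cbv beta.
  repeat (rewrite (d1_atDv _ U v x0 y0); [|smooth_tac|smooth_tac|assumption]).
  repeat (rewrite (d2_atDv _ U v x0 y0); [|smooth_tac|smooth_tac|assumption]).
  unfold detHess, atDv.
  rewrite ?E1, ?E2, ?E3, ?V1, ?V2, ?V3.
  ring.
Qed.
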